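(* Let $G$ be a finite graph with no isolated vertices. If the order of $G$ is even, then there is no nontrivial circuit injection $f:G_M\rightarrow B$ with $B$ a binary matroid if and only if $G$ is Hamiltonian. If the order of $G$ is odd, then there is no nontrivial circuit injection $f:G_M\rightarrow B$ with $B$ a binary matroid if and only if $G$ is almost Hamiltonian.
   Context: Graphs are undirected without loops or multiple edges. The order of $G$ is its number of vertices. $G_M$ is the cycle matroid of $G$: cells are the edges of $G$ and circuits are the edge sets of circuits (cycles) of $G$. A matroid is a pair $(S,\mathscr{C})$, $S\neq\emptyset$, $\mathscr{C}\subseteq 2^S$, satisfying: (I) $A,B\in\mathscr{C}$, $A\subseteq B$ implies $A=B$; (II) $A,B\in\mathscr{C}$, $a\in A\cap B$, $b\in (A\cup B)\setminus(A\cap B)$ implies there exists $D\in\mathscr{C}$ with $D\subseteq A\cup B$, $a\notin D$, $b\in D$. A matroid $(S,\mathscr{C})$ is binary if for all $A,B\in\mathscr{C}$ the symmetric difference $A\oplus B=(A\cup B)\setminus(A\cap B)$ is a union of pairwise disjoint members of $\mathscr{C}$. A circuit injection $f:G_M\rightarrow B$ is a bijection from $E(G)$ onto the cells of $B$ sending each circuit of $G$ to a circuit of $B$; it is nontrivial if $B$ has a circuit which is not the image of any circuit of $G$. $G$ is Hamiltonian if it has a circuit containing all its vertices. A graph of order $n$ is almost Hamiltonian if every set of $n-1$ of its vertices is contained in (the vertex set of) some circuit of $G$. *)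

(* Defs.v *)
From mathcomp Require Import all_boot.
Set Implicit Arguments. Unset Strict Implicit. Unset Printing Implicit Defensive.

Definition simple_graph (V : finType) (adj : rel V) : Prop :=
  symmetric adj /\ irreflexive adj.

Definition edges (V : finType) (adj : rel V) : {set {set V}} :=
  [set e : {set V} | [exists x, exists y, adj x y && (e == [set x; y])]].

Definition graph_cycle (V : finType) (adj : rel V) (p : seq V) : Prop :=
  [/\ uniq p, 2 < size p & cycle adj p].

Definition cycle_edges (V : finType) (p : seq V) : {set {set V}} :=
  [set [set x; next p x] | x in p].

(* D is a circuit of the cycle matroid G_M: the edge set of a circuit of G. *)
Definition graph_circuit (V : finType) (adj : rel V) (D : {set {set V}}) : Prop :=
  exists p, graph_cycle adj p /\ D = cycle_edges p.

Definition hamiltonian (V : finType) (adj : rel V) : Prop :=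
  exists p, graph_cycle adj p /\ forall v : V, v \in p.

Definition almost_hamiltonian (V : finType) (adj : rel V) : Prop :=
  forall X : {set V}, #|X| = #|V|.-1 ->
    exists p, graph_cycle adj p /\ {subset X <= p}.

Definition matroid (S : finType) (C : {set {set S}}) : Prop :=
  [/\ [set: S] != set0,
      (forall A B, A \in C -> B \in C -> A \subset B -> A = B) &
      (forall A B a b, A \in C -> B \in C -> a \in A :&: B ->
          b \in (A :|: B) :\: (A :&: B) ->
          exists2 D, D \in C & [/\ D \subset A :|: B, a \notin D & b \in D])].

Definition binary (S : finType) (C : {set {set S}}) : Prop :=
  forall A B, A \in C -> B \in C ->
    exists P : {set {set S}},
      [/\ P \subset C,
          (forall X Y, X \in P -> Y \in P -> X != Y -> [disjoint X & Y]) &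
          \bigcup_(X in P) X = (A :|: B) :\: (A :&: B)].

Definition circuit_injection (V : finType) (adj : rel V) (S : finType)
    (C : {set {set S}}) (f : {set V} -> S) : Prop :=
  [/\ {in edges adj &, injective f},
      f @: edges adj = [set: S] &
      forall D, graph_circuit adj D -> f @: D \in C].

Definition nontrivial_ci (V : finType) (adj : rel V) (S : finType)
    (C : {set {set S}}) (f : {set V} -> S) : Prop :=
  exists2 X, X \in C & forall D, graph_circuit adj D -> f @: D <> X.

Definition no_nontrivial_binary_ci (V : finType) (adj : rel V) : Prop :=
  forall (S : finType) (C : {set {set S}}) (f : {set V} -> S),
    matroid C -> binary C -> circuit_injection adj C f -> ~ nontrivial_ci adj C f.

(* Main.v *)
Require Import Defs.
From mathcomp Require Import all_boot zify.
From Stdlib Require Import Classical.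
Set Implicit Arguments. Unset Strict Implicit. Unset Printing Implicit Defensive.

Definition sd (T : finType) (A B : {set T}) : {set T} :=
  [set x | (x \in A) (+) (x \in B)].

Lemma in_sd (T : finType) (A B : {set T}) x : (x \in sd A B) = (x \in A) (+) (x \in B).
Proof. by rewrite inE. Qed.

Lemma sdC (T : finType) (A B : {set T}) : sd A B = sd B A.
Proof. by apply/setP=> x; rewrite !in_sd addbC. Qed.

Lemma sdA (T : finType) (A B D : {set T}) : sd A (sd B D) = sd (sd A B) D.
Proof. by apply/setP=> x; rewrite !in_sd addbA. Qed.

Lemma sd0 (T : finType) (A : {set T}) : sd A set0 = A.
Proof. by apply/setP=> x; rewrite !in_sd inE addbF. Qed.

Lemma sd0l (T : finType) (A : {set T}) : sd set0 A = A.
Proof. by rewrite sdC sd0. Qed.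

Lemma sdvv (T : finType) (A : {set T}) : sd A A = set0.
Proof. by apply/setP=> x; rewrite !in_sd inE addbb. Qed.

Lemma sd_binE (T : finType) (A B : {set T}) : (A :|: B) :\: (A :&: B) = sd A B.
Proof. by apply/setP=> x; rewrite !inE; case: (x \in A); case: (x \in B). Qed.

Lemma sd_sub (T : finType) (A B D : {set T}) :
  A \subset D -> B \subset D -> sd A B \subset D.
Proof.
move=> /subsetP hA /subsetP hB; apply/subsetP=> x; rewrite in_sd.
case hx: (x \in A) => /=.
  by move=> _; apply: hA.
by move=> xB; apply: hB.
Qed.

Lemma card_sd (T : finType) (A B : {set T}) :
  #|sd A B| + 2 * #|A :&: B| = #|A| + #|B|.
Proof.
have -> : sd A B = (A :\: B) :|: (B :\: A).
  by apply/setP=> x; rewrite !inE; case: (x \in A); case: (x \in B).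
rewrite cardsU.
have -> : (A :\: B) :&: (B :\: A) = set0.
  by apply/setP=> x; rewrite !inE; case: (x \in A); case: (x \in B).
rewrite cards0 subn0 -(cardsID B A) -(cardsID A B) (setIC B A). lia.
Qed.

Lemma odd_card_sd (T : finType) (A B : {set T}) :
  odd #|sd A B| = odd #|A| (+) odd #|B|.
Proof.
have := card_sd A B => /(congr1 odd); rewrite !oddD /= addbF addbb addbF.
by move=> <-.
Qed.

Lemma sd_disj (T : finType) (A B : {set T}) :
  [disjoint A & B] -> sd A B = A :|: B.
Proof.
move=> h; apply/setP=> x; rewrite !inE.
by case hA: (x \in A); case hB: (x \in B) => //; have := disjointFr h hA; rewrite hB.
Qed.

Definition Uof (S : finType) (C : {set {set S}}) (Y : {set S}) : Prop :=
  exists P : {set {set S}},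
      [/\ P \subset C,
          (forall X Y, X \in P -> Y \in P -> X != Y -> [disjoint X & Y]) &
          \bigcup_(X in P) X = Y].

Lemma Uof0 (S : finType) (C : {set {set S}}) : Uof C set0.
Proof. exists set0; split; first exact: sub0set.
- by move=> X Y; rewrite inE.
- by rewrite big_set0.
Qed.

Lemma Uof_C (S : finType) (C : {set {set S}}) A : A \in C -> Uof C A.
Proof.
move=> hA; exists [set A]; split; first by rewrite sub1set.
- by move=> X Y; rewrite !inE => /eqP -> /eqP ->; rewrite eqxx.
- by rewrite big_set1.
Qed.

Lemma Uof_add (S : finType) (C : {set {set S}}) A Y :
  A \in C -> Uof C Y -> [disjoint A & Y] -> Uof C (A :|: Y).
Proof.
move=> hA [P [PC Pd PU]] dAY; exists (A |: P); split.
- by rewrite subUset sub1set hA PC.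
- have hs : forall X, X \in P -> [disjoint A & X].
    move=> X XP; apply: disjointWr dAY.
    by rewrite -PU; apply: (bigcup_sup X XP).
  move=> X Z; rewrite !inE => /orP[/eqP->|XP] /orP[/eqP->|ZP].
  + by rewrite eqxx.
  + by move=> _; apply: hs.
  + by move=> _; rewrite disjoint_sym; apply: hs.
  + exact: Pd.
- by rewrite bigcup_setU big_set1 PU.
Qed.

Lemma Uof_split (S : finType) (C : {set {set S}}) Y a :
  Uof C Y -> a \in Y ->
  exists A R, [/\ A \in C, a \in A, Uof C R, [disjoint A & R] & Y = A :|: R].
Proof.
move=> [P [PC Pd PU]] aY.
move: aY; rewrite -PU => /bigcupP [A AP aA].
exists A, (\bigcup_(X in P :\ A) X); split.
- exact: (subsetP PC).
- exact: aA.
- exists (P :\ A); split.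
  + exact: subset_trans (subsetDl _ _) PC.
  + by move=> X Z; rewrite !inE => /andP[_ XP] /andP[_ ZP]; apply: Pd.
  + by [].
- rewrite -setI_eq0; apply/eqP/setP=> x; rewrite !inE.
  apply/negbTE/andP=> [[xA /bigcupP [X]]]; rewrite !inE => /andP[XA XP] xX.
  have := Pd A X AP XP; rewrite eq_sym XA => /(_ isT) /disjointFr /(_ xA).
  by rewrite xX.
- by rewrite (big_setD1 A AP).
Qed.

Lemma card_disjU (T : finType) (A B : {set T}) :
  [disjoint A & B] -> #|A :|: B| = #|A| + #|B|.
Proof. by move=> d; rewrite cardsU (disjoint_setI0 d) cards0 subn0. Qed.

Lemma Uof_sd (S : finType) (C : {set {set S}}) : binary C ->
  forall Y1 Y2, Uof C Y1 -> Uof C Y2 -> Uof C (sd Y1 Y2).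
Proof.
move=> bin Y1 Y2.
suff: forall n (Y1 Y2 : {set S}), #|Y1| + #|Y2| < n -> Uof C Y1 -> Uof C Y2 -> Uof C (sd Y1 Y2).
  by move=> /(_ (#|Y1| + #|Y2|).+1 Y1 Y2 (ltnSn _)).
elim=> [//|n IH] {}Y1 {}Y2 hn U1 U2.
have [->|] := eqVneq Y1 set0; first by rewrite sd0l.
case/set0Pn=> a aY1.
have [A [R [AC aA UR dAR eY1]]] := Uof_split U1 aY1.
have cY1 : #|Y1| = #|A| + #|R| by rewrite eY1 card_disjU.
have cA : 0 < #|A| by apply/card_gt0P; exists a.
have [dAY2|] := boolP [disjoint A & Y2].
  have -> : sd Y1 Y2 = A :|: sd R Y2.
    apply/setP=> x; rewrite eY1 !inE.
    case xA: (x \in A) => /=; last by [].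
    by rewrite (disjointFr dAY2 xA).
  apply: Uof_add => //.
    apply: IH => //; lia.
  rewrite -setI_eq0; apply/eqP/setP=> x; rewrite !inE.
  case xA: (x \in A) => //=.
  by rewrite (disjointFr dAR xA) (disjointFr dAY2 xA) addbF.
rewrite -setI_eq0 => /set0Pn [b]; rewrite inE => /andP[bA bY2].
have [B [Q [BC bB UQ dBQ eY2]]] := Uof_split U2 bY2.
have cY2 : #|Y2| = #|B| + #|Q| by rewrite eY2 card_disjU.
have e : sd Y1 Y2 = sd (sd A B) (sd R Q).
  rewrite eY1 eY2 -(sd_disj dAR) -(sd_disj dBQ).
  by apply/setP=> x; rewrite !in_sd; case: (x \in A); case: (x \in B);
     case: (x \in R); case: (x \in Q).
have UAB : Uof C (sd A B).
  have [P [PC Pd PU]] := bin A B AC BC.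
  by exists P; split => //; rewrite PU sd_binE.
have URQ : Uof C (sd R Q) by apply: IH => //; lia.
have cAB := card_sd A B.
have cAB1 : 0 < #|A :&: B| by apply/card_gt0P; exists b; rewrite inE bA.
have cRQ := card_sd R Q.
rewrite e; apply: IH => //; lia.
Qed.

Definition minC (S : finType) (W : {set S} -> bool) : {set {set S}} :=
  [set Z | [&& Z != set0, W Z &
     [forall Z' : {set S}, ((Z' \subset Z) && W Z' && (Z' != set0)) ==> (Z' == Z)]]].

Lemma minC_exists (S : finType) (W : {set S} -> bool) Y :
  W Y -> Y != set0 -> exists2 Z, Z \in minC W & Z \subset Y.
Proof.
move=> WY Y0.
have P0 : (Y \subset Y) && W Y && (Y != set0) by rewrite subxx WY Y0.
case: (@arg_minnP _ Y (fun Z : {set S} => (Z \subset Y) && W Z && (Z != set0)) (fun Z => #|Z|) P0) => Z /andP[/andP[ZY WZ] Z0] Zmin.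
exists Z => //; rewrite inE Z0 WZ /=; apply/forallP=> Z'; apply/implyP.
move=> /andP[/andP[Z'Z WZ'] Z'0].
have := Zmin Z'; rewrite (subset_trans Z'Z ZY) WZ' Z'0 => /(_ isT) c.
by rewrite eqEcard Z'Z c.
Qed.

Lemma minC_decomp (S : finType) (W : {set S} -> bool) :
  (forall A B, W A -> W B -> W (sd A B)) ->
  forall Y, W Y -> exists P : {set {set S}},
      [/\ P \subset minC W,
          (forall X Y, X \in P -> Y \in P -> X != Y -> [disjoint X & Y]) &
          \bigcup_(X in P) X = Y].
Proof.
move=> Wsd Y.
suff: forall n (Y : {set S}), #|Y| < n -> W Y -> Uof (minC W) Y by apply; apply: ltnSn.
elim=> [//|n IH] {}Y hn WY.
have [->|Y0] := eqVneq Y set0; first exact: Uof0.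
have [Z ZC ZY] := minC_exists WY Y0.
have WZ : W Z by move: ZC; rewrite inE => /and3P[].
have Z0 : Z != set0 by move: ZC; rewrite inE => /and3P[].
have eY : Y = Z :|: (Y :\: Z).
  apply/setP=> x; rewrite !inE; case xZ: (x \in Z) => //=.
  by rewrite (subsetP ZY _ xZ).
have dZ : [disjoint Z & Y :\: Z].
  rewrite -setI_eq0; apply/eqP/setP=> x; rewrite !inE.
  by case: (x \in Z); rewrite ?andbF.
rewrite eY; apply: Uof_add => //; apply: IH.
  have := card_disjU dZ; rewrite -eY.
  have : 0 < #|Z| by rewrite card_gt0.
  lia.
have -> : Y :\: Z = sd Y Z.
  apply/setP=> x; rewrite !inE; case xZ: (x \in Z) => /=; last by rewrite addbF.
  by rewrite (subsetP ZY _ xZ).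
exact: Wsd.
Qed.

Lemma minC_matroid (S : finType) (W : {set S} -> bool) :
  (forall A B, W A -> W B -> W (sd A B)) -> [set: S] != set0 -> matroid (minC W).
Proof.
move=> Wsd S0; split => //.
  move=> A B; rewrite !inE => /and3P[A0 WA _] /and3P[_ _ /forallP hB] AB.
  by apply/eqP; have := hB A; rewrite AB WA A0 => /implyP; apply.
move=> A B a b AC BC aAB bAB.
have WA : W A by move: AC; rewrite inE => /and3P[].
have WB : W B by move: BC; rewrite inE => /and3P[].
have [P [PC Pd PU]] := minC_decomp Wsd (Wsd _ _ WA WB).
move: bAB; rewrite sd_binE -PU => /bigcupP [D DP bD].
exists D; first exact: (subsetP PC).
have DsAB : D \subset sd A B by rewrite -PU; apply: (bigcup_sup D DP).
split => //.
  apply: subset_trans DsAB _; apply/subsetP=> x; rewrite !inE.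
  by case: (x \in A); case: (x \in B).
apply/negP=> aD; have := subsetP DsAB _ aD; rewrite in_sd.
by move: aAB; rewrite inE => /andP[-> ->].
Qed.

Lemma minC_binary (S : finType) (W : {set S} -> bool) :
  (forall A B, W A -> W B -> W (sd A B)) -> binary (minC W).
Proof.
move=> Wsd A B AC BC.
have WA : W A by move: AC; rewrite inE => /and3P[].
have WB : W B by move: BC; rewrite inE => /and3P[].
have [P [PC Pd PU]] := minC_decomp Wsd (Wsd _ _ WA WB).
by exists P; split => //; rewrite sd_binE.
Qed.

Definition star (V : finType) (X : {set {set V}}) (v : V) : {set {set V}} :=
  [set e in X | v \in e].
Definition oddv (V : finType) (X : {set {set V}}) : {set V} :=
  [set v | odd #|star X v|].

Lemma oddv_sd (V : finType) (X Y : {set {set V}}) :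
  oddv (sd X Y) = sd (oddv X) (oddv Y).
Proof.
apply/setP=> v.
have E : star (sd X Y) v = sd (star X v) (star Y v).
  by apply/setP=> e; rewrite !inE; case: (v \in e); rewrite ?andbF ?andbT.
by rewrite !inE E odd_card_sd.
Qed.

Lemma oddv0 (V : finType) : oddv (set0 : {set {set V}}) = set0.
Proof.
apply/setP=> v; rewrite !inE.
have -> : star set0 v = set0 by apply/setP=> e; rewrite !inE.
by rewrite cards0.
Qed.

Lemma oddv1 (V : finType) (e : {set V}) : oddv [set e] = e.
Proof.
apply/setP=> v; rewrite !inE.
case ve: (v \in e).
  have -> : star [set e] v = [set e].
    by apply/setP=> e'; rewrite !inE; case: eqP => // ->; rewrite ve.
  by rewrite cards1.
have -> : star [set e] v = set0.
  by apply/setP=> e'; rewrite !inE; case: eqP => // ->; rewrite ve.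
by rewrite cards0.
Qed.

Lemma set2_sd (V : finType) (x y : V) : x != y -> [set x; y] = sd [set x] [set y].
Proof.
move=> xy; apply/setP=> z; rewrite !inE.
by case: (eqVneq z x) => [->|]; rewrite ?(negbTE xy) //= addbF.
Qed.

Lemma oddv_sub (V : finType) (X Y : {set {set V}}) (T : {set V}) :
  (forall e, e \in X -> e \subset T) -> oddv X \subset T.
Proof.
move=> h; apply/subsetP=> v; rewrite inE => /odd_gt0 /card_gt0P [e].
by rewrite inE => /andP[/h /subsetP eT /eT].
Qed.

Lemma handshake (V : finType) (X : {set {set V}}) :
  (forall e, e \in X -> ~~ odd #|e|) -> ~~ odd #|oddv X|.
Proof.
move: {2}#|X| (erefl #|X|) => n; elim: n X => [|n IH] X cX h.
  by move/eqP: cX; rewrite cards_eq0 => /eqP ->; rewrite oddv0 cards0.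
have : 0 < #|X| by rewrite cX.
case/card_gt0P => e eX.
have -> : X = sd [set e] (X :\ e).
  by apply/setP=> x; rewrite !inE; case: (eqVneq x e) => [->|] //=.
rewrite oddv_sd odd_card_sd oddv1 (negbTE (h e eX)) /=.
apply: IH.
  by move: cX; rewrite (cardsD1 e X) eX add1n => -[].
by move=> e'; rewrite inE => /andP[_ /h].
Qed.

Lemma edgesP (V : finType) (adj : rel V) e :
  reflect (exists x y, adj x y /\ e = [set x; y]) (e \in edges adj).
Proof.
rewrite inE; apply: (iffP existsP) => [[x /existsP [y /andP[a /eqP->]]]|[x [y [a ->]]]].
  by exists x, y.
by exists x; apply/existsP; exists y; rewrite a eqxx.
Qed.

Lemma edge_card (V : finType) (adj : rel V) e :
  simple_graph adj -> e \in edges adj -> #|e| = 2.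
Proof.
move=> [sym irr] /edgesP [x [y [a ->]]]; rewrite cards2.
by case: eqVneq a => [->|]; rewrite ?irr.
Qed.

Lemma edge_adj (V : finType) (adj : rel V) x y :
  simple_graph adj -> [set x; y] \in edges adj -> adj x y.
Proof.
move=> [sym irr] /edgesP [a [b [ab e]]].
have ha : a \in [set x; y] by rewrite e !inE eqxx.
have hb : b \in [set x; y] by rewrite e !inE eqxx orbT.
have hx : x \in [set a; b] by rewrite -e !inE eqxx.
have hy : y \in [set a; b] by rewrite -e !inE eqxx orbT.
move: ha hb; rewrite !inE => /orP[/eqP ea|/eqP ea] /orP[/eqP eb|/eqP eb];
  subst; rewrite ?irr // in ab *.
by rewrite sym.
Qed.

Lemma edgeE (V : finType) (adj : rel V) x y : adj x y -> [set x; y] \in edges adj.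
Proof. by move=> a; apply/edgesP; exists x, y. Qed.

Lemma next_neq (V : finType) (p : seq V) x :
  uniq p -> 1 < size p -> x \in p -> next p x != x.
Proof.
move=> Up sp xp; case: (rot_to xp) => i q e.
rewrite -(next_rot i Up) e.
have := rot_uniq i p; rewrite Up e => Uq.
have : size (x :: q) = size p by rewrite -e size_rot.
case: q e Uq => [|a q] e Uq /=; first by move=> h; rewrite -h in sp.
rewrite eqxx /= => _; move: Uq => /= /andP[]; rewrite inE negb_or eq_sym.
by case/andP.
Qed.

Lemma next2_neq (V : finType) (p : seq V) x :
  uniq p -> 2 < size p -> x \in p -> next p (next p x) != x.
Proof.
move=> Up sp xp; case: (rot_to xp) => i q e.
rewrite -!(next_rot i Up) e.
have := rot_uniq i p; rewrite Up e => Uq.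
have : size (x :: q) = size p by rewrite -e size_rot.
case: q e Uq => [|a [|b q]] e Uq /=; try by move=> h; rewrite -h in sp.
move: Uq => /= /andP[]; rewrite !inE !negb_or => /and3P[xa xb _] _ _.
have -> : (x == x) = true by apply/eqP.
rewrite (eq_sym a x) (negbTE xa).
have -> : (a == a) = true by apply/eqP.
by rewrite eq_sym.
Qed.

Lemma cycle_walk (V : finType) (p : seq V) (Q : V -> Prop) x0 :
  uniq p -> x0 \in p -> Q x0 -> (forall x, x \in p -> Q x -> Q (next p x)) ->
  forall y, y \in p -> Q y.
Proof.
move=> Up xp Q0 step; case: (rot_to xp) => i q e.
have Up' : uniq (x0 :: q) by rewrite -e rot_uniq.
have mem' : forall z, (z \in x0 :: q) = (z \in p) by move=> z; rewrite -e mem_rot.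
have nxt' : forall z, next (x0 :: q) z = next p z by move=> z; rewrite -e next_rot.
suff hj : forall j, j < size (x0 :: q) -> Q (nth x0 (x0 :: q) j).
  move=> y; rewrite -mem' => yp; rewrite -(nth_index x0 yp); apply: hj.
  by rewrite index_mem.
elim=> [//|j IH] hj.
have hj' : j < size (x0 :: q) by apply: ltnW.
have := step _ _ (IH hj'); rewrite -mem' mem_nth // => /(_ isT).
rewrite -nxt' next_nth mem_nth // index_uniq //.
Qed.

Lemma cedgeP (V : finType) (p : seq V) e :
  reflect (exists2 x, x \in p & e = [set x; next p x]) (e \in cycle_edges p).
Proof. exact: imsetP. Qed.

Lemma cedge_vert (V : finType) (p : seq V) e v :
  e \in cycle_edges p -> v \in e -> v \in p.
Proof.
case/cedgeP=> x xp ->; rewrite !inE => /orP[/eqP->|/eqP->] //.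
by rewrite mem_next.
Qed.

Lemma star_cycle (V : finType) (p : seq V) v :
  uniq p -> v \in p ->
  star (cycle_edges p) v = [set [set v; next p v]; [set prev p v; v]].
Proof.
move=> Up vp; apply/setP=> e; rewrite !inE; apply/andP/orP.
  case=> /cedgeP [x xp ->]; rewrite !inE => /orP[/eqP->|/eqP->].
    by left.
  by right; rewrite prev_next.
case=> /eqP->; split; rewrite ?inE ?eqxx ?orbT //; apply/cedgeP.
  by exists v.
by exists (prev p v); rewrite ?mem_prev ?next_prev.
Qed.

Lemma card_star_cycle (V : finType) (p : seq V) v :
  uniq p -> 2 < size p -> v \in p -> #|star (cycle_edges p) v| = 2.
Proof.
move=> Up sp vp; rewrite star_cycle // cards2.
case: eqVneq => // E.
have : next p v \in [set prev p v; v] by rewrite -E !inE eqxx orbT.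
rewrite !inE => /orP[/eqP En|/eqP En].
  have := next2_neq Up sp vp; rewrite En next_prev // eqxx.
  by [].
have := next_neq Up (ltnW sp) vp; rewrite En eqxx.
by [].
Qed.

Lemma oddv_cycle (V : finType) (p : seq V) :
  uniq p -> 2 < size p -> oddv (cycle_edges p) = set0.
Proof.
move=> Up sp; apply/setP=> v; rewrite !inE.
case vp: (v \in p); first by rewrite card_star_cycle.
have -> : star (cycle_edges p) v = set0.
  apply/setP=> e; rewrite !inE; apply/negP=> /andP[ep ve].
  by rewrite (cedge_vert ep ve) in vp.
by rewrite cards0.
Qed.

Lemma oddv_sub_cycle (V : finType) (p : seq V) (X : {set {set V}}) :
  X \subset cycle_edges p -> {subset oddv X <= p}.
Proof.
move=> XC v; rewrite inE => /odd_gt0 /card_gt0P [e]; rewrite inE => /andP[eX ve].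
exact: (cedge_vert (subsetP XC _ eX) ve).
Qed.

Lemma cedge_sub (V : finType) (adj : rel V) (p : seq V) :
  cycle adj p -> cycle_edges p \subset edges adj.
Proof.
move=> cp; apply/subsetP=> e /cedgeP [x xp ->]; apply: edgeE.
exact: next_cycle.
Qed.

Lemma cycle_proper_odd (V : finType) (p : seq V) (D : {set {set V}}) :
  uniq p -> 2 < size p -> D \subset cycle_edges p -> D != set0 ->
  D != cycle_edges p -> oddv D != set0.
Proof.
move=> Up sp DC D0 DnC.
have [x xp Qx] : exists2 x, x \in p & [set x; next p x] \in D.
  case/set0Pn: D0 => e eD; case/cedgeP: (subsetP DC _ eD) => x xp ex.
  by exists x; rewrite -?ex.
have [y /and3P[yp Qy nQy]] :
    exists y, [&& y \in p, [set y; next p y] \in D & [set next p y; next p (next p y)] \notin D].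
  case: (boolP [exists y, [&& y \in p, [set y; next p y] \in D & [set next p y; next p (next p y)] \notin D]]) => [/existsP //|].
  rewrite negb_exists => /forallP H; exfalso.
  suff hall : forall z, z \in p -> [set z; next p z] \in D.
    move: DnC; rewrite eqEsubset DC /= => /negP; apply.
    by apply/subsetP=> e /cedgeP [z zp ->]; apply: hall.
  apply: (cycle_walk (Q := fun z => is_true ([set z; next p z] \in D))) Up xp Qx _.
  move=> z zp Qz; have := H z; rewrite zp Qz /= negbK.
  by [].
apply/set0Pn; exists (next p y); rewrite inE.
have -> : star D (next p y) = [set [set y; next p y]].
  apply/setP=> e; rewrite !inE; apply/andP/eqP.
    case=> eD ve.
    have nyp : next p y \in p by rewrite mem_next.
    have : e \in star (cycle_edges p) (next p y) by rewrite inE (subsetP DC _ eD) ve.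
    rewrite star_cycle // prev_next // !inE => /orP[/eqP E|/eqP //].
    by rewrite -E eD in nQy.
  by move=> ->; rewrite Qy !inE eqxx orbT.
by rewrite cards1.
Qed.

Lemma cycle_in_X (V : finType) (adj : rel V) (X : {set {set V}}) (q : seq V) :
  simple_graph adj -> X \subset edges adj ->
  uniq q -> 2 < size q -> cycle (fun x y => [set x; y] \in X) q ->
  graph_cycle adj q /\ cycle_edges q \subset X.
Proof.
move=> sg XE Uq sq cq; split.
  split => //; apply: sub_cycle cq => x y h; apply: edge_adj => //.
  exact: (subsetP XE).
by apply/subsetP=> e /cedgeP [x xp ->]; apply: (next_cycle cq).
Qed.

Lemma other_edge (V : finType) (adj : rel V) (X : {set {set V}}) x y :
  simple_graph adj -> X \subset edges adj -> oddv X = set0 ->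
  [set x; y] \in X -> exists w, [/\ [set x; w] \in X, w != x & w != y].
Proof.
move=> [sym irr] XE X0 xyX.
have xs : [set x; y] \in star X x by rewrite /star inE xyX /= !inE eqxx.
have ev : ~~ odd #|star X x|.
  apply/negP=> h; have hx : x \in oddv X by rewrite inE.
  by rewrite X0 inE in hx.
move: ev; rewrite (cardsD1 [set x; y]) xs.
have [->|] := eqVneq #|star X x :\ [set x; y]| 0; first by [].
rewrite -lt0n => /card_gt0P [e]; rewrite !inE => /andP[exy /andP[eX xe]] _.
case/edgesP: (subsetP XE _ eX) => a [b [ab ee]].
have anb : a != b by apply: contraTneq ab => ->; rewrite irr.
move: xe; rewrite ee !inE => /orP[/eqP xa|/eqP xb].
  subst; exists b; split => //; first by rewrite eq_sym.
  by apply: contraNneq exy => ->.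
subst; exists a; split; first by rewrite setUC.
  by [].
by apply: contraNneq exy => ->; rewrite setUC.
Qed.

Lemma find_cycle (V : finType) (adj : rel V) (X : {set {set V}}) :
  simple_graph adj -> X \subset edges adj -> X != set0 -> oddv X = set0 ->
  exists p, graph_cycle adj p /\ cycle_edges p \subset X.
Proof.
move=> sg XE Xn0 X0.
pose rX := fun x y : V => [set x; y] \in X.
have rXs : forall x y, rX x y = rX y x by move=> x y; rewrite /rX setUC.
suff main : forall k x y t, #|V| - size [:: x, y & t] <= k ->
    uniq [:: x, y & t] -> path rX x (y :: t) ->
    exists p, graph_cycle adj p /\ cycle_edges p \subset X.
  case/set0Pn: Xn0 => e eX.
  case/edgesP: (subsetP XE _ eX) => a [b [ab ee]].
  apply: (main #|V| a b [::]); first by rewrite leq_subr.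
    rewrite /= inE andbT; apply: contraTneq ab => ->; by case: sg => _ ->.
  by rewrite /= andbT /rX -ee.
have close : forall x y t w, uniq [:: x, y & t] -> path rX x (y :: t) ->
    rX x w -> w != x -> w != y -> w \in [:: x, y & t] ->
    exists p, graph_cycle adj p /\ cycle_edges p \subset X.
  move=> x y t w Us ps xw wx wy; rewrite !inE (negbTE wx) (negbTE wy) /= => wt.
  case/splitPr: t / wt Us ps => t1 t2 Us; rewrite /rX => ps.
  exists (x :: y :: rcons t1 w); apply: cycle_in_X => //.
  - have e : [:: x, y & t1 ++ w :: t2] = [:: x, y & rcons t1 w] ++ t2.
      by rewrite /= -cats1 -catA.
    by move: Us; rewrite e cat_uniq => /andP[].
  - by rewrite /= size_rcons.
  - have wxX : [set w; x] \in X by rewrite setUC.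
    rewrite /= rcons_path last_rcons wxX andbT.
    move: ps => /= /andP[-> ps] /=.
    move: ps; rewrite cat_path rcons_path => /andP[-> /=].
    by case/andP.
elim=> [|k IH] x y t hk Us ps.
  have xy : rX x y by case/andP: ps.
  have [w [wX wx wy]] := other_edge sg XE X0 xy.
  case ws: (w \in [:: x, y & t]); first exact: (close x y t w).
  have : uniq [:: w, x, y & t] by rewrite cons_uniq ws Us.
  move=> U; have c1 : size [:: w, x, y & t] <= #|V| by rewrite -(card_uniqP U) max_card.
  exfalso; move: hk c1 => /=; lia.
have xy : rX x y by case/andP: ps.
have [w [wX wx wy]] := other_edge sg XE X0 xy.
case ws: (w \in [:: x, y & t]); first exact: (close x y t w).
apply: (IH w x (y :: t)).
- have : uniq [:: w, x, y & t] by rewrite cons_uniq ws Us.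
  move=> U; have c1 : size [:: w, x, y & t] <= #|V| by rewrite -(card_uniqP U) max_card.
  move: hk c1 => /=; lia.
- by rewrite cons_uniq ws Us.
- have wxX : [set w; x] \in X by rewrite setUC.
  have e : path rX w [:: x, y & t] = rX w x && path rX x (y :: t) by [].
  by rewrite e ps andbT.
Qed.

Lemma cedge_n0 (V : finType) (p : seq V) : 0 < size p -> cycle_edges p != set0.
Proof.
case: p => // x q _; apply/set0Pn; exists [set x; next (x :: q) x].
by apply/cedgeP; exists x; rewrite ?inE ?eqxx.
Qed.

Lemma even_ind (V : finType) (adj : rel V) (K : {set {set V}} -> Prop) :
  simple_graph adj -> K set0 ->
  (forall p, graph_cycle adj p -> K (cycle_edges p)) ->
  (forall X Y : {set {set V}}, X \subset edges adj -> Y \subset edges adj -> K X -> K Y -> K (sd X Y)) ->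
  forall X : {set {set V}}, X \subset edges adj -> oddv X = set0 -> K X.
Proof.
move=> sg K0 Kc Ksd X.
move: {2}#|X| (leqnn #|X|) => n; elim: n X => [|n IH] X cX XE X0.
  by move: cX; rewrite leqn0 cards_eq0 => /eqP ->.
have [->|Xn0] := eqVneq X set0; first by [].
have [p [gp DX]] := find_cycle sg XE Xn0 X0.
case: (gp) => Up sp cp.
have DE : cycle_edges p \subset edges adj := cedge_sub cp.
have -> : X = sd (cycle_edges p) (sd X (cycle_edges p)).
  by rewrite sdC -sdA sdvv sd0.
apply: Ksd; [exact: DE | exact: sd_sub | exact: Kc | apply: IH].
- have := card_sd X (cycle_edges p).
  have -> : X :&: cycle_edges p = cycle_edges p by apply/setIidPr.
  have : 0 < #|cycle_edges p| by rewrite card_gt0 cedge_n0 // ltnW // ltnW.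
  lia.
- exact: sd_sub.
- by rewrite oddv_sd X0 oddv_cycle // sdvv.
Qed.

Lemma realize (V : finType) (R : {set V} -> Prop) (Z : {set V}) v0 :
  R set0 -> (forall A B : {set V}, R A -> R B -> R (sd A B)) ->
  (forall a, a \in Z -> R (sd [set v0] [set a])) ->
  forall T : {set V}, T \subset Z -> ~~ odd #|T| -> R T.
Proof.
move=> R0 Rsd Ra T TZ eT.
suff : R (if odd #|T| then sd T [set v0] else T) by rewrite (negbTE eT).
clear eT; move: {2}#|T| (erefl #|T|) TZ => n; elim: n T => [|n IH] T cT TZ.
  by move/eqP: cT; rewrite cards_eq0 => /eqP ->; rewrite cards0.
have : 0 < #|T| by rewrite cT.
case/card_gt0P => t tT.
have eT : T = sd (T :\ t) [set t].
  apply/setP=> z; rewrite !inE; case: (eqVneq z t) => [->|] /=.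
    by rewrite tT.
  by rewrite addbF.
have cT' : #|T :\ t| = n by move: cT; rewrite (cardsD1 t T) tT add1n => -[].
have T'Z : T :\ t \subset Z by apply: subset_trans (subsetDl _ _) TZ.
have IH' := IH _ cT' T'Z.
have Rt := Ra t (subsetP TZ t tT).
rewrite cT /= -cT'.
case h' : (odd #|T :\ t|) in IH' *; move: IH' => /= h.
  rewrite eT; have := Rsd _ _ h Rt.
  by rewrite -sdA (sdA [set v0]) sdvv sd0l.
rewrite eT; have := Rsd _ _ h Rt.
have -> : sd (sd (T :\ t) [set t]) [set v0] = sd (T :\ t) (sd [set v0] [set t]).
  apply/setP=> z; rewrite !in_sd.
  by case: (z \in T :\ t); case: (z \in [set t]); case: (z \in [set v0]).
by [].
Qed.

Lemma realize_cycle (V : finType) (p : seq V) (T : {set V}) :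
  uniq p -> 2 < size p -> {subset T <= p} -> ~~ odd #|T| ->
  exists2 P : {set {set V}}, P \subset cycle_edges p & oddv P = T.
Proof.
move=> Up sp Tp eT.
have [v0 v0p] : exists v0, v0 \in p by case: p Up sp Tp => // v q; exists v; rewrite inE eqxx.
pose R := fun A : {set V} => exists2 P : {set {set V}}, P \subset cycle_edges p & oddv P = A.
apply: (@realize V R [set x | x \in p] v0).
- by exists set0; rewrite ?sub0set ?oddv0.
- move=> A B [P1 s1 e1] [P2 s2 e2]; exists (sd P1 P2); first exact: sd_sub.
  by rewrite oddv_sd e1 e2.
- move=> a; rewrite inE; move: a.
  apply: (cycle_walk (Q := fun a => R (sd [set v0] [set a])) Up v0p).
    by rewrite sdvv; exists set0; rewrite ?sub0set ?oddv0.
  move=> x xp [P sP eP]; exists (sd P [set [set x; next p x]]).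
    apply: sd_sub => //; rewrite sub1set; apply/cedgeP; by exists x.
  rewrite oddv_sd oddv1 eP set2_sd; last by rewrite eq_sym next_neq // ltnW.
  by rewrite -sdA (sdA [set x]) sdvv sd0l.
- by apply/subsetP=> x /Tp; rewrite inE.
- exact: eT.
Qed.

Lemma realize_conn (V : finType) (adj : rel V) (v0 : V) (T : {set V}) :
  simple_graph adj -> (forall a b, connect adj a b) -> ~~ odd #|T| ->
  exists2 Y : {set {set V}}, Y \subset edges adj & oddv Y = T.
Proof.
move=> [sym irr] conn eT.
pose R := fun A : {set V} => exists2 Y : {set {set V}}, Y \subset edges adj & oddv Y = A.
have R0 : R set0 by exists set0; rewrite ?sub0set ?oddv0.
have Rsd : forall A B, R A -> R B -> R (sd A B).
  move=> A B [P1 s1 e1] [P2 s2 e2]; exists (sd P1 P2); first exact: sd_sub.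
  by rewrite oddv_sd e1 e2.
apply: (@realize V R setT v0 R0 Rsd _ T (subsetT T) eT).
move=> a _; have /connectP [s ps ->] := conn v0 a.
elim: s v0 ps => [|y s IH] x /=; first by rewrite sdvv.
case/andP=> xy ps.
have xny : x != y by apply: contraTneq xy => ->; rewrite irr.
have Rxy : R [set x; y].
  by exists [set [set x; y]]; rewrite ?sub1set ?edgeE ?oddv1.
have := Rsd _ _ Rxy (IH y ps).
by rewrite set2_sd // -sdA (sdA [set y]) sdvv sd0l.
Qed.

Lemma cycle_connect (V : finType) (adj : rel V) (p : seq V) x y :
  graph_cycle adj p -> x \in p -> y \in p -> connect adj x y.
Proof.
case=> Up sp cp xp; move: y.
apply: (cycle_walk (Q := fun z => is_true (connect adj x z)) Up xp).
  exact: connect0.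
move=> z zp xz; apply: connect_trans xz (connect1 _).
exact: next_cycle.
Qed.

Lemma mem_imf (T S : finType) (D : {set T}) (f : T -> S) e (X : {set T}) :
  {in D &, injective f} -> e \in D -> X \subset D -> (f e \in f @: X) = (e \in X).
Proof.
move=> finj eD XD; apply/imsetP/idP => [[e' e'X fe]|eX]; last by exists e.
by rewrite (finj _ _ eD (subsetP XD _ e'X) fe).
Qed.

Lemma imf_sd (T S : finType) (D : {set T}) (f : T -> S) (X Y : {set T}) :
  {in D &, injective f} -> X \subset D -> Y \subset D ->
  f @: sd X Y = sd (f @: X) (f @: Y).
Proof.
move=> finj XD YD; apply/setP=> z; rewrite in_sd.
case: (boolP (z \in f @: D)) => [/imsetP [e eD ->]|zD].
  by rewrite !(mem_imf finj eD) ?in_sd // sd_sub.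
have h : forall W : {set T}, W \subset D -> (z \in f @: W) = false.
  move=> W WD; apply/negP=> zW; move/negP: zD; apply.
  exact: (subsetP (imsetS f WD)).
by rewrite !h // sd_sub.
Qed.

Lemma no_ci_of_HC (V : finType) (adj : rel V) :
  simple_graph adj -> (exists x y, adj x y) ->
  (forall T : {set V}, T != set0 -> ~~ odd #|T| ->
      exists p, graph_cycle adj p /\ {subset T <= p}) ->
  no_nontrivial_binary_ci adj.
Proof.
move=> sg [x0 [y0 a0]] HC S C f [mS mI mII] bin [finj fsurj fcirc] [X0 X0C X0nt].
set E := edges adj in finj fsurj.
have surj : forall z, exists2 e, e \in E & z = f e.
  move=> z; have : z \in f @: E by rewrite fsurj inE.
  by case/imsetP=> e eE ->; exists e.
pose K := fun X : {set {set V}} => Uof C (f @: X).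
have Kev : forall X : {set {set V}}, X \subset E -> oddv X = set0 -> K X.
  apply: even_ind => //.
  - by rewrite /K imset0; apply: Uof0.
  - by move=> p gp; apply: Uof_C; apply: fcirc; exists p.
  - move=> X Y XE YE KX KY; rewrite /K (imf_sd finj XE YE).
    exact: Uof_sd.
pose X := [set e in E | f e \in X0].
have XE : X \subset E by apply/subsetP=> e; rewrite inE => /andP[].
have fX : f @: X = X0.
  apply/setP=> z; have [e eE ->] := surj z.
  by rewrite (mem_imf finj eE XE) inE eE.
have [p0 [[Up0 sp0 cp0] _]] : exists p, graph_cycle adj p /\ {subset [set x0; y0] <= p}.
  apply: HC.
    by apply/set0Pn; exists x0; rewrite !inE eqxx.
  by rewrite (edge_card sg (edgeE a0)).
have fcE : forall p, graph_cycle adj p -> f @: cycle_edges p \in C.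
  by move=> p gp; apply: fcirc; exists p.
have [T0|Tn0] := eqVneq (oddv X) set0.
  have [X00|Xn0] := eqVneq X set0.
    have : f @: set0 \subset f @: cycle_edges p0 by rewrite imset0 sub0set.
    rewrite -X00 fX => /(mI _ _ X0C (fcE p0 (And3 Up0 sp0 cp0))) e0.
    have := cedge_n0 (ltnW (ltnW sp0)); case/set0Pn=> e ep.
    have : f e \in f @: cycle_edges p0 by apply: imset_f.
    by rewrite -e0 -fX X00 imset0 inE.
  have [p [gp DX]] := find_cycle sg XE Xn0 T0.
  have : f @: cycle_edges p \subset X0 by rewrite -fX imsetS.
  move/(mI _ _ (fcE p gp) X0C) => e.
  by apply: (X0nt (cycle_edges p)); first exists p.
have eT : ~~ odd #|oddv X|.
  apply: handshake => e eX; rewrite (edge_card sg (subsetP XE _ eX)).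
  by [].
have [p [gp Tp]] := HC _ Tn0 eT.
case: (gp) => Up sp cp.
have cE := cedge_sub cp.
have [P PC PT] := realize_cycle Up sp Tp eT.
have PE : P \subset E := subset_trans PC cE.
pose Y := sd X P.
have YE : Y \subset E by apply: sd_sub.
have KY : K Y by apply: Kev => //; rewrite oddv_sd PT sdvv.
have eP : P = sd X Y by rewrite /Y sdA sdvv sd0l.
have UP : Uof C (f @: P).
  rewrite eP (imf_sd finj XE YE) fX; apply: Uof_sd => //; exact: Uof_C.
have [e eP'] : exists e, e \in P.
  apply/set0Pn; apply: contraNneq Tn0 => P0.
  by rewrite -PT P0 oddv0.
have [A [R [AC _ _ _ eA]]] := Uof_split UP (imset_f f eP').
have AP : A \subset f @: P by rewrite eA subsetUl.
have AC' : A \subset f @: cycle_edges p by apply: subset_trans AP (imsetS _ PC).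
have eAc := mI _ _ AC (fcE p gp) AC'.
have CP : cycle_edges p \subset P.
  apply/subsetP=> e' e'C.
  have e'E : e' \in E := subsetP cE _ e'C.
  rewrite -(mem_imf finj e'E PE) (subsetP AP) // eAc.
  exact: imset_f.
have PeC : P = cycle_edges p by apply/eqP; rewrite eqEsubset PC CP.
by move: Tn0; rewrite -PT PeC oddv_cycle // eqxx.
Qed.



Lemma minC_bad (S V : finType) (W : {set S} -> bool) (oddS : {set S} -> {set V}) :
  (forall A B, W A -> W B -> W (sd A B)) ->
  (forall A B, oddS (sd A B) = sd (oddS A) (oddS B)) ->
  oddS set0 = set0 ->
  forall Y, W Y -> oddS Y != set0 -> exists2 X, X \in minC W & oddS X != set0.
Proof.
move=> Wsd osd o0 Y0.
suff: forall n (Y : {set S}), #|Y| <= n -> W Y -> oddS Y != set0 ->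
  exists2 X, X \in minC W & oddS X != set0 by apply; apply: leqnn.
elim=> [|n IH] Y cY WY oY.
  move: cY; rewrite leqn0 cards_eq0 => /eqP Ye; exfalso; move: oY.
  by rewrite Ye o0 eqxx.
have Yn0 : Y != set0 by apply: contraNneq oY => ->; rewrite o0.
have [Z ZC ZY] := minC_exists WY Yn0.
have [oZ|oZ] := eqVneq (oddS Z) set0; last by exists Z.
have WZ : W Z by move: ZC; rewrite inE => /and3P[].
have Z0 : Z != set0 by move: ZC; rewrite inE => /and3P[].
apply: (IH (sd Y Z)).
- have := card_sd Y Z; have -> : Y :&: Z = Z by apply/setIidPr.
  have : 0 < #|Z| by rewrite card_gt0.
  lia.
- exact: Wsd.
- by rewrite osd oZ sd0.
Qed.

Lemma ci_of_T (V : finType) (adj : rel V) (Y : {set {set V}}) :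
  simple_graph adj -> Y \subset edges adj -> oddv Y != set0 ->
  (forall p, graph_cycle adj p -> ~ {subset oddv Y <= p}) ->
  ~ no_nontrivial_binary_ci adj.
Proof.
move=> sg YE oY nocyc H.
set T := oddv Y in oY nocyc.
have [e0 e0Y] : exists e0, e0 \in Y.
  by apply/set0Pn; apply: contraNneq oY => Y0; rewrite /T Y0 oddv0.
have e0E : e0 \in edges adj := subsetP YE _ e0Y.
pose S : finType := {e : {set V} | e \in edges adj}.
pose s0 : S := exist _ e0 e0E.
pose f := fun e : {set V} => (insubd s0 e : S).
have fK : {in edges adj, cancel f val} by move=> e eE; rewrite /f insubdK.
have vK : cancel val f by move=> z; rewrite /f valKd.
pose oddS := fun Z : {set S} => oddv (val @: Z).
pose W := fun Z : {set S} => (oddS Z == set0) || (oddS Z == T).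
have vinj : {in [set: S] &, injective (val : S -> {set V})} by move=> a b _ _; apply: val_inj.
have osd : forall A B, oddS (sd A B) = sd (oddS A) (oddS B).
  by move=> A B; rewrite /oddS (imf_sd vinj) ?subsetT // oddv_sd.
have o0 : oddS set0 = set0 by rewrite /oddS imset0 oddv0.
have Wsd : forall A B, W A -> W B -> W (sd A B).
  move=> A B; rewrite /W osd => /orP[/eqP->|/eqP->] /orP[/eqP->|/eqP->];
  by rewrite ?sdvv ?sd0 ?sd0l eqxx ?orbT.
have vf : forall D : {set {set V}}, D \subset edges adj -> val @: (f @: D) = D.
  move=> D DE; rewrite -imset_comp (eq_in_imset (g := id)) ?imset_id //.
  by move=> e eD; rewrite /= fK // (subsetP DE).
have fv : forall Z : {set S}, f @: (val @: Z) = Z.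
  by move=> Z; rewrite -imset_comp (eq_in_imset (g := id)) ?imset_id // => z _; rewrite /= vK.
have finj : {in edges adj &, injective f}.
  by move=> a b aE bE fab; rewrite -(fK a aE) -(fK b bE) fab.
have fsurj : f @: edges adj = [set: S].
  apply/setP=> z; rewrite inE; rewrite -(vK z); apply: imset_f; exact: valP.
have circC : forall D : {set {set V}}, graph_circuit adj D -> f @: D \in minC W.
  move=> D [p [[Up sp cp] ->]].
  have cE := cedge_sub cp.
  rewrite inE; apply/and3P; split.
  - apply/set0Pn; case/set0Pn: (cedge_n0 (ltnW (ltnW sp))) => e ep.
    by exists (f e); apply: imset_f.
  - by rewrite /W /oddS vf // oddv_cycle // eqxx.
  - apply/forallP=> Z'; apply/implyP=> /andP[/andP[Z'D WZ'] Z'0].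
    have D'C : val @: Z' \subset cycle_edges p.
      by rewrite -(vf _ cE); apply: imsetS.
    have D'0 : val @: Z' != set0.
      by apply: contraNneq Z'0 => h; rewrite -(fv Z') h imset0.
    move: WZ'; rewrite /W /oddS => /orP[/eqP o'|/eqP o'].
      have : val @: Z' == cycle_edges p.
        apply/negPn/negP=> ne; have := cycle_proper_odd Up sp D'C D'0 ne.
        by rewrite o' eqxx.
      by move/eqP=> e; rewrite -(fv Z') e.
    exfalso; apply: (nocyc p (And3 Up sp cp)) => v; rewrite -o'.
    exact: oddv_sub_cycle.
apply: (H S (minC W) f).
- apply: minC_matroid => //; apply/set0Pn; exists s0; by rewrite inE.
- exact: minC_binary.
- by split.
have WY : W (f @: Y) by rewrite /W /oddS vf // eqxx orbT.
have oY' : oddS (f @: Y) != set0 by rewrite /oddS vf.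
have [X XC oX] := minC_bad Wsd osd o0 WY oY'.
exists X => // D gD eX.
move: gD oX => [p [[Up sp cp] eD]].
by rewrite -eX /oddS vf eD ?oddv_cycle ?eqxx // cedge_sub.
Qed.

Lemma HC_of_noci (V : finType) (adj : rel V) (x0 : V) :
  simple_graph adj -> (forall v : V, exists u, adj v u) ->
  no_nontrivial_binary_ci adj ->
  forall T0 : {set V}, T0 != set0 -> ~~ odd #|T0| ->
    exists p, graph_cycle adj p /\ {subset T0 <= p}.
Proof.
move=> sg noiso H T0 T00 eT0.
apply: NNPP => nocyc.
case: (boolP [forall a, forall b, connect adj a b]) => [/forallP conn|].
  have [Y YE oY] := realize_conn x0 sg (fun a b => forallP (conn a) b) eT0.
  apply: (ci_of_T sg YE _ _ H).
    by rewrite oY.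
  by move=> p gp sub; apply: nocyc; exists p; split => // v; rewrite -oY; apply: sub.
rewrite negb_forall => /existsP [a]; rewrite negb_forall => /existsP [b nab].
have [a' aa'] := noiso a.
have [b' bb'] := noiso b.
case: (sg) => sym irr.
have ncab' : ~~ connect adj a b'.
  apply: contra nab => h; apply: connect_trans h (connect1 _); by rewrite sym.
have nc : forall x y, ~~ connect adj x y -> x != y.
  by move=> x y; apply: contraNneq => ->; apply: connect0.
have nca'b : ~~ connect adj a' b.
  apply: contra nab => h; exact: connect_trans (connect1 aa') h.
have nca'b' : ~~ connect adj a' b'.
  apply: contra ncab' => h; exact: connect_trans (connect1 aa') h.
pose e1 := [set a; a']. pose e2 := [set b; b'].
have e12 : e1 != e2.
  apply/negP=> /eqP E; have : a \in e2 by rewrite -E !inE eqxx.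
  by rewrite !inE (negbTE (nc _ _ nab)) (negbTE (nc _ _ ncab')).
pose Y := [set e1; e2].
have YE : Y \subset edges adj.
  by apply/subsetP=> e /set2P [->|->]; apply: edgeE.
have oY : oddv Y = sd e1 e2 by rewrite /Y set2_sd // oddv_sd !oddv1.
have aY : a \in oddv Y.
  by rewrite oY in_sd !inE eqxx (negbTE (nc _ _ nab)) (negbTE (nc _ _ ncab')).
have bY : b \in oddv Y.
  rewrite oY in_sd !inE eqxx orTb addbT negb_or.
  by rewrite eq_sym (nc _ _ nab) eq_sym (nc _ _ nca'b).
apply: (@ci_of_T V adj Y sg YE _ _ H).
  by apply/set0Pn; exists a.
move=> p gp sub.
by have := cycle_connect gp (sub _ aY) (sub _ bY); rewrite (negbTE nab).
Qed.

Theorem theorem2p2 (V : finType) (adj : rel V) :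
  simple_graph adj ->
  0 < #|V| ->
  (forall v : V, exists u, adj v u) ->
  (~~ odd #|V| -> (no_nontrivial_binary_ci adj <-> hamiltonian adj)) /\
  (odd #|V| -> (no_nontrivial_binary_ci adj <-> almost_hamiltonian adj)).
Proof.
move=> sg n0 noiso.
have [x0 _] : exists x0 : V, true by case/card_gt0P: n0 => v _; exists v.
have [y0 a0] := noiso x0.
have xy0 : x0 != y0 by case: sg => _ irr; apply: contraTneq a0 => ->; rewrite irr.
have n2 : 1 < #|V|.
  by have := max_card [set x0; y0]; rewrite cards2 xy0.
have ex : exists x y, adj x y by exists x0, y0.
split=> hpar; split.
- move=> H.
  have T00 : [set: V] != set0 by apply/set0Pn; exists x0; rewrite inE.
  have eT : ~~ odd #|[set: V]| by rewrite cardsT.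
  have [p [gp sub]] := HC_of_noci x0 sg noiso H T00 eT.
  by exists p; split => // v; apply: sub; rewrite inE.
- move=> [p [gp allp]]; apply: no_ci_of_HC => // T _ _.
  by exists p; split => // v _; apply: allp.
- move=> H X cX; apply: (HC_of_noci x0 sg noiso H).
    rewrite -card_gt0 cX; move: n2 hpar; case: #|V| => [|[|k]] //.
  by rewrite cX; move: hpar; case: #|V| => [|k] //= ->.
- move=> AH; apply: no_ci_of_HC => // T _ eT.
  have [w wT] : exists w, w \notin T.
    apply/existsP; rewrite -negb_forall; apply: contra eT => /forallP hT.
    have -> : T = [set: V] by apply/setP=> v; rewrite inE hT.
    by rewrite cardsT.
  have [p [gp sub]] := AH [set~ w] (cardsC1 w).
  exists p; split => // v vT; apply: sub; rewrite !inE.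
  by apply: contraNneq wT => <-.
Qed.
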